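(* If a stationary renewal process is a finitary factor of an i.i.d.\ process, then its jump distribution is non-lattice and has exponential tails.
   Context: A (discrete) renewal process is a $\{0,1\}$-valued process $X=(X_n)_{n\in\mathbb Z}$ with infinitely many 1's in both directions such that the distances between consecutive 1's are i.i.d.; their common law, a distribution $T$ on the positive integers, is the jump distribution. $T$ is non-lattice if $\gcd\{t:\mathbb P(T=t)>0\}=1$, and has exponential tails if there are $C,c>0$ with $\mathbb P(T\ge t)\le Ce^{-ct}$ for all $t\ge1$. A process $X$ is a factor of $Y=(Y_n)_{n\in\mathbb Z}$ if $X_n=\varphi(\dots,Y_{n-1},Y_n,Y_{n+1},\dots)$ for a measurable, shift-equivariant $\varphi$; it is finitary if there is an almost surely finite stopping time $R$ for the filtration $\mathcal F_r=\sigma(Y_n:|n|\le r)$ such that $X_0$ is $\mathcal F_R$-measurable. *)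

(* Defs.v *)
From HB Require Import structures.
From mathcomp Require Import all_boot all_order all_algebra.
From mathcomp Require Import all_classical all_reals all_analysis.
Set Implicit Arguments. Unset Strict Implicit. Unset Printing Implicit Defensive.
Import Order.TTheory GRing.Theory Num.Theory.
Local Open Scope classical_set_scope.
Local Open Scope ring_scope.

Section Defs.
Context {R : realType} {d : measure_display} {T : measurableType d}.
Context {d' : measure_display} {S : measurableType d'}.

Definition iid_process (P : probability T R) (Y : int -> T -> S) : Prop :=
  [/\ (forall n, measurable_fun setT (Y n)),
      (forall n (A : set S), measurable A ->
          P (Y n @^-1` A) = P (Y 0 @^-1` A)) &
      (forall (s : seq int) (A : int -> set S), uniq s ->
          (forall i, measurable (A i)) ->
          P (\bigcap_(i in [set` s]) (Y i @^-1` A i))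
          = (\prod_(i <- s) P (Y i @^-1` A i))%E)].

Definition cylinder_events : set (set (int -> S)) :=
  [set B | exists k (A : set S), measurable A /\ B = [set y | A (y k)]].

Definition product_measurable (phi : (int -> S) -> bool) : Prop :=
  forall b : bool, <<s cylinder_events >> (phi @^-1` [set b]).

Definition factor_process (phi : (int -> S) -> bool) (Y : int -> T -> S)
    : int -> T -> bool :=
  fun n w => phi (fun k => Y (n + k) w).

Definition filtr (Y : int -> T -> S) (r : nat) : set (set T) :=
  <<s [set B | exists n (A : set S),
         [/\ (`|n| <= r)%N, measurable A & B = Y n @^-1` A]] >>.

(** Stopping times with values in N u {oo} (None = oo). *)
Definition R_le (Rt : T -> option nat) (r : nat) : set T :=
  [set w | exists m, Rt w = Some m /\ (m <= r)%N].

(** X is a finitary factor of Y via phi: phi is measurable and there is an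
    a.s. finite stopping time Rt for (F_r) with X_0 being F_Rt-measurable. *)
Definition finitary_factor (P : probability T R) (Y : int -> T -> S)
    (phi : (int -> S) -> bool) : Prop :=
  product_measurable phi /\
  exists Rt : T -> option nat,
    [/\ P [set w | Rt w = None] = 0%E,
        (forall r, filtr Y r (R_le Rt r)) &
        (forall r (b : bool),
            filtr Y r ([set w | factor_process phi Y 0 w = b] `&` R_le Rt r))].

Fixpoint gaps_from (X : int -> T -> bool) (a : int) (ts : seq nat) (w : T)
    : Prop :=
  match ts with
  | [::] => True
  | t :: ts' => (forall j : nat, (0 < j < t)%N -> X (a + j%:Z) w = false) /\
                X (a + t%:Z) w = true /\ gaps_from X (a + t%:Z) ts' w
  end.

Definition gap_event (X : int -> T -> bool) (a : int) (ts : seq nat) : set T :=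
  [set w | X a w = true /\ gaps_from X a ts w].

Definition stationary_renewal (P : probability T R) (X : int -> T -> bool)
    (p : nat -> R) : Prop :=
  [/\ [/\ p 0%N = 0, (forall t, 0 <= p t) &
          (\sum_(0 <= t <oo) (p t)%:E = 1)%E],
      (forall (s : seq int) (b : int -> bool) (m : int),
          P [set w | forall i, i \in s -> X (i + m) w = b i]
          = P [set w | forall i, i \in s -> X i w = b i]),
      P [set w | forall N : int, (exists n, N < n /\ X n w = true) /\
                                 (exists n, n < N /\ X n w = true)] = 1%E &
      (forall ts : seq nat, all (fun t => (0 < t)%N) ts ->
          P (gap_event X (0%R : int) ts)
          = (P [set w | X (0%R : int) w = true] * \prod_(t <- ts) (p t)%:E)%E)].

Definition non_lattice (p : nat -> R) : Prop :=
  forall g : nat, (forall t, 0 < p t -> (g %| t)%N) -> g = 1%N.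

Definition exp_tails (p : nat -> R) : Prop :=
  exists C c : R, 0 < C /\ 0 < c /\
    forall t : nat, (1 <= t)%N ->
      (\sum_(t <= s <oo) (p s)%:E <= (C * expR (- (c * t%:R)))%:E)%E.

End Defs.

(* Main.v *)
Require Import Defs.
From HB Require Import structures.
From mathcomp Require Import all_boot all_order all_algebra.
From mathcomp Require Import all_classical all_reals all_analysis.
From mathcomp Require Import ring lra zify.
Set Implicit Arguments. Unset Strict Implicit. Unset Printing Implicit Defensive.
Import Order.TTheory GRing.Theory Num.Theory.
Local Open Scope classical_set_scope.
Local Open Scope ring_scope.

Lemma pi_dynkin (U : Type) (G D : set (set U)) :
  setI_closed G -> G `<=` D -> dynkin D -> <<s G >> `<=` D.
Proof.
move=> GI GD dD; rewrite -setI_closed_g_dynkin_g_sigma_algebra //.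
exact: smallest_sub.
Qed.

Section Indep.
Context {R : realType} {d : measure_display} {T : measurableType d}
  (P : probability T R) {d' : measure_display} {S : measurableType d'}
  (Y : int -> T -> S).
Hypothesis Ymeas : forall n, measurable_fun setT (Y n).
Hypothesis Yind : forall (s : seq int) (A : int -> set S), uniq s ->
          (forall i, measurable (A i)) ->
          P (\bigcap_(i in [set` s]) (Y i @^-1` A i))
          = (\prod_(i <- s) P (Y i @^-1` A i))%E.

Lemma Ypre_meas n (A : set S) : measurable A -> measurable (Y n @^-1` A).
Proof. by move=> mA; rewrite -[_ @^-1` _]setTI; apply: Ymeas. Qed.

Definition gens (s : seq int) : set (set T) :=
  [set B | exists n (A : set S), [/\ n \in s, measurable A & B = Y n @^-1` A]].
Definition sig (s : seq int) : set (set T) := <<s gens s >>.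
Definition cyl (s : seq int) (A : int -> set S) : set T :=
  [set w | forall i, i \in s -> A i (Y i w)].
Definition cylT (s : seq int) : set (set T) :=
  [set E | exists A : int -> set S, (forall i, measurable (A i)) /\ E = cyl s A].

Lemma cyl_eq s A : cyl s A = \bigcap_(i in [set` s]) (Y i @^-1` A i).
Proof. by apply/seteqP; split => w /= H i /H. Qed.

Lemma cyl_meas s A : (forall i, measurable (A i)) -> measurable (cyl s A).
Proof.
move=> mA; elim: s => [|x s IH].
  by rewrite (_ : cyl _ _ = setT) //; apply/seteqP; split => w //= _ i.
rewrite (_ : cyl _ _ = Y x @^-1` A x `&` cyl s A).
  by apply: measurableI => //; exact: Ypre_meas.
apply/seteqP; split => w /=.
  by move=> H; split; [apply: H; rewrite inE eqxx|move=> i iS; apply: H; rewrite inE iS orbT].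
by move=> [H1 H2] i; rewrite inE => /orP[/eqP->//|/H2].
Qed.

Lemma cyl_undup s A : cyl (undup s) A = cyl s A.
Proof. by apply/seteqP; split => w /= H i iS; apply: H; rewrite ?mem_undup // -mem_undup. Qed.

Lemma P_cyl s A : uniq s -> (forall i, measurable (A i)) ->
  P (cyl s A) = (\prod_(i <- s) P (Y i @^-1` A i))%E.
Proof. by move=> us mA; rewrite cyl_eq Yind. Qed.

Lemma cylT_meas s : cylT s `<=` measurable.
Proof. by move=> E [A [mA ->]]; exact: cyl_meas. Qed.

Lemma cylT_setI s : setI_closed (cylT s).
Proof.
move=> E F [A [mA ->]] [B [mB ->]]; exists (fun i => A i `&` B i); split.
  by move=> i; apply: measurableI.
apply/seteqP; split => w /=.
  by move=> [H1 H2] i iS; split; [apply: H1|apply: H2].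
by move=> H; split => i /H [].
Qed.

Lemma gens_cylT s : gens s `<=` cylT s.
Proof.
move=> E [n [A [ns mA ->]]]; exists (fun i => if i == n then A else setT); split.
  by move=> i; case: ifP.
apply/seteqP; split => w /=.
  by move=> H i _; case: ifP => // /eqP ->.
by move=> /(_ n ns); rewrite eqxx.
Qed.

Lemma sig_cylT s : sig s `<=` <<s cylT s >>.
Proof.
apply: smallest_sub; first exact: smallest_sigma_algebra.
exact: subset_trans (@gens_cylT s) (@sub_gen_smallest _ _ _).
Qed.

Lemma sig_meas s : sig s `<=` measurable.
Proof.
apply: smallest_sub; first exact: sigma_algebra_measurable.
by move=> E [n [A [_ mA ->]]]; exact: Ypre_meas.
Qed.

Lemma finP (A : set T) : measurable A -> P A = (fine (P A))%:E.
Proof. by move=> mA; rewrite fineK // fin_num_measure. Qed.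

Lemma dyn_indep (E0 : set T) : measurable E0 ->
  dynkin [set F | measurable F /\ P (F `&` E0) = (P F * P E0)%E].
Proof.
move=> mE0; split.
- by split => //; rewrite setTI probability_setT mul1e.
- move=> F [mF HF]; split; first exact: measurableC.
  rewrite probability_setC // (_ : ~` F `&` E0 = E0 `\` F); last first.
    by rewrite setDE setIC.
  rewrite measureD //; last by rewrite (le_lt_trans (probability_le1 _ mE0)) ?ltry.
  transitivity (P E0 - P (F `&` E0))%E; first by rewrite setIC.
  rewrite HF (finP mF) (finP mE0) -!EFinM -!EFinB; congr EFin; ring.
- move=> F tF HF; split.
    by apply: bigcup_measurable => k _; case: (HF k).
  rewrite setI_bigcupl measure_semi_bigcup; last first.
  + by apply: bigcup_measurable => k _; apply: measurableI => //; case: (HF k).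
  + exact: trivIset_setIr.
  + by move=> k; apply: measurableI => //; case: (HF k).
  rewrite measure_semi_bigcup //; last first.
  + by apply: bigcup_measurable => k _; case: (HF k).
  + by move=> k; case: (HF k).
  rewrite muleC (finP mE0) -nneseriesZl; last by move=> i _; exact: measure_ge0.
  apply: eq_eseriesr => k _ /=; case: (HF k) => mFk ->; rewrite muleC -finP //.
Qed.

Lemma indep_cyl s s' E F : (forall i, i \in s -> i \notin s') ->
  cylT s E -> cylT s' F -> P (E `&` F) = (P E * P F)%E.
Proof.
move=> dis [A [mA ->]] [B [mB ->]].
rewrite -(cyl_undup s) -(cyl_undup s').
have mC : forall i, measurable ((fun i => if i \in s then A i else B i) i).
  by move=> i /=; case: ifP.
have us : uniq (undup s ++ undup s').
  rewrite cat_uniq !undup_uniq /= andbT; apply/hasPn => i.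
  rewrite !mem_undup => iS'; apply/negP => iS.
  by move: (dis i iS); rewrite iS'.
rewrite (_ : cyl _ A `&` cyl _ B = cyl (undup s ++ undup s') (fun i => if i \in s then A i else B i)).
  rewrite !P_cyl ?undup_uniq // big_cat /=; congr (_ * _)%E.
    by apply: eq_big_seq => i; rewrite mem_undup => ->.
  apply: eq_big_seq => i; rewrite mem_undup; case: ifP => // /dis.
  by move=> /negP.
apply/seteqP; split => w /=.
  move=> [H1 H2] i; rewrite mem_cat => /orP[iS|iS].
    by rewrite -mem_undup iS; apply: H1.
  case: ifP => [iS'|_]; last by apply: H2.
  by move: iS; rewrite mem_undup (negbTE (dis i iS')).
move=> H; split => i iS.
  by move: (H i); rewrite mem_cat iS /= -mem_undup iS; apply.
move: (H i); rewrite mem_cat iS orbT; case: ifP => // iS'.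
by move: iS; rewrite mem_undup (negbTE (dis i iS')).
by apply.
Qed.

Lemma indep s s' E F : (forall i, i \in s -> i \notin s') ->
  sig s E -> sig s' F -> P (E `&` F) = (P E * P F)%E.
Proof.
move=> dis sE sF.
have step1 : forall F0, cylT s' F0 -> forall E0, sig s E0 ->
    P (E0 `&` F0) = (P E0 * P F0)%E.
  move=> F0 cF0 E0 sE0.
  have H : <<s cylT s >> `<=` [set F | measurable F /\ P (F `&` F0) = (P F * P F0)%E].
    have := @pi_dynkin _ (cylT s) _ (@cylT_setI s) _ (dyn_indep (cylT_meas cF0)).
    apply => E1 cE1; split; first exact: (cylT_meas cE1).
    exact: indep_cyl cE1 cF0.
  by case: (H E0 (sig_cylT sE0)).
have H : <<s cylT s' >> `<=` [set F | measurable F /\ P (F `&` E) = (P F * P E)%E].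
  have := @pi_dynkin _ (cylT s') _ (@cylT_setI s') _ (dyn_indep (sig_meas sE)).
  apply => F1 cF1; split; first exact: (cylT_meas cF1).
  by rewrite setIC step1 // muleC.
by case: (H F (sig_cylT sF)) => _; rewrite setIC muleC.
Qed.

End Indep.


Lemma trivIset_pre (U V : Type) (f : U -> V) (F : nat -> set V) :
  trivIset setT F -> trivIset setT (fun k => f @^-1` F k).
Proof. by move=> tF i j Di Dj [w [Fi Fj]]; apply: (tF i j) => //; exists (f w). Qed.

Section Shift.
Context {R : realType} {d : measure_display} {T : measurableType d}
  (P : probability T R) {d' : measure_display} {S : measurableType d'}
  (Y : int -> T -> S).
Hypothesis Ymeas : forall n, measurable_fun setT (Y n).
Hypothesis Yid : forall n (A : set S), measurable A ->
          P (Y n @^-1` A) = P (Y 0 @^-1` A).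
Hypothesis Yind : forall (s : seq int) (A : int -> set S), uniq s ->
          (forall i, measurable (A i)) ->
          P (\bigcap_(i in [set` s]) (Y i @^-1` A i))
          = (\prod_(i <- s) P (Y i @^-1` A i))%E.

Definition Psi (m : int) (w : T) : int -> S := fun k => Y (m + k) w.

Definition pcyl (s : seq int) (A : int -> set S) : set (int -> S) :=
  [set y | forall i, i \in s -> A i (y i)].
Definition PCyl : set (set (int -> S)) :=
  [set B | exists s (A : int -> set S), (forall i, measurable (A i)) /\ B = pcyl s A].

Lemma PCyl_setI : setI_closed PCyl.
Proof.
move=> E F [s [A [mA ->]]] [s' [B [mB ->]]].
exists (s ++ s'), (fun i => (if i \in s then A i else setT) `&` (if i \in s' then B i else setT)).
split.
  by move=> i; apply: measurableI; case: ifP.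
apply/seteqP; split => y /=.
  move=> [H1 H2] i _; split; case: ifP => // iS; [exact: H1|exact: H2].
move=> H; split => i iS; have := H i; rewrite mem_cat iS ?orbT => /(_ isT) [H1 H2]; [exact: H1|exact: H2].
Qed.

Lemma Psi_pcyl m s A :
  Psi m @^-1` pcyl s A = cyl Y (undup [seq m + i | i <- s]) (fun j => A (j - m)).
Proof.
have E i : m + i - m = i by rewrite addrC addKr.
apply/seteqP; split => w /=.
  move=> H j; rewrite mem_undup => /mapP [i iS ->].
  by rewrite E; apply: H.
move=> H i iS; have := H (m + i); rewrite mem_undup E; apply.
by apply/mapP; exists i.
Qed.

Lemma P_Psi_pcyl m s A : (forall i, measurable (A i)) ->
  P (Psi m @^-1` pcyl s A) = (\prod_(i <- undup s) P (Y 0 @^-1` A i))%E.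
Proof.
move=> mA; rewrite Psi_pcyl (P_cyl Yind) ?undup_uniq //.
rewrite undup_map_inj; last by move=> x y /addrI.
rewrite big_map; apply: eq_bigr => i _.
by rewrite Yid // addrC addKr.
Qed.

Lemma Psi_pcyl_meas m s A : (forall i, measurable (A i)) ->
  measurable (Psi m @^-1` pcyl s A).
Proof. by move=> mA; rewrite Psi_pcyl; apply: (cyl_meas Ymeas). Qed.

Lemma shift_inv m : forall B, <<s PCyl >> B ->
  [/\ measurable (Psi m @^-1` B), measurable (Psi 0 @^-1` B) &
      P (Psi m @^-1` B) = P (Psi 0 @^-1` B)].
Proof.
move=> B; apply: (@pi_dynkin _ PCyl
  [set B | [/\ measurable (Psi m @^-1` B), measurable (Psi 0 @^-1` B) &
      P (Psi m @^-1` B) = P (Psi 0 @^-1` B)]] PCyl_setI).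
- move=> E [s [A [mA ->]]]; split; try exact: Psi_pcyl_meas.
  by rewrite !P_Psi_pcyl.
- split.
  + by split; rewrite ?preimage_setT //; exact: measurableT.
  + move=> E [m1 m2 e]; split; rewrite -?preimage_setC; try exact: measurableC.
    by rewrite !probability_setC // e.
  + move=> F tF HF; split; rewrite ?preimage_bigcup.
    * by apply: bigcup_measurable => k _; case: (HF k).
    * by apply: bigcup_measurable => k _; case: (HF k).
    rewrite !measure_semi_bigcup.
    * by apply: eq_eseriesr => k _; case: (HF k).
    * by move=> k; case: (HF k).
    * exact: trivIset_pre.
    * by apply: bigcup_measurable => k _; case: (HF k).
    * by move=> k; case: (HF k).
    * exact: trivIset_pre.
    * by apply: bigcup_measurable => k _; case: (HF k).
Qed.

Lemma cyl_ev_PCyl : <<s @cylinder_events d' S >> `<=` <<s PCyl >>.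
Proof.
apply: (smallest_sub (@smallest_sigma_algebra _ setT PCyl)).
move=> E [k [A [mA ->]]]; apply: sub_gen_smallest.
exists [:: k], (fun i => if i == k then A else setT); split.
  by move=> i; case: ifP.
apply/seteqP; split => y /=.
  by move=> Ak i; rewrite inE => /eqP ->; rewrite eqxx.
by move=> /(_ k); rewrite inE eqxx; apply.
Qed.

End Shift.


Lemma sigma_pre (U V : Type) (f : U -> V) (H : set (set U)) :
  sigma_algebra setT H -> sigma_algebra setT [set B | H (f @^-1` B)].
Proof.
move=> [H0 HC HU]; split => /=.
- by rewrite preimage_set0.
- by move=> A HA; apply: HC.
- by move=> F HF; rewrite preimage_bigcup; apply: HU.
Qed.

Lemma sigma_img (U V : Type) (f : U -> V) (G : set (set V)) :
  sigma_algebra setT G ->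
  sigma_algebra setT [set E | exists B, G B /\ E = f @^-1` B].
Proof.
move=> [G0 GC GU]; split => /=.
- by exists set0; rewrite preimage_set0.
- move=> A [B [GB ->]]; exists (setT `\` B); split; first exact: GC.
  by [].
- move=> F HF; pose B n := proj1_sig (cid (HF n)).
  exists (\bigcup_n B n); split.
    by apply: GU => n; case: (proj2_sig (cid (HF n))).
  rewrite preimage_bigcup; apply: eq_bigcupr => n _.
  by case: (proj2_sig (cid (HF n))).
Qed.

Definition window (m : int) (r : nat) : seq int :=
  [seq m + (i%:Z - r%:Z) | i <- iota 0 (r.*2.+1)].

Lemma mem_window m r n : (n \in window m r) = (m - r%:Z <= n <= m + r%:Z).
Proof.
apply/idP/idP.
  by move=> /mapP [i]; rewrite mem_iota add0n => H ->; apply/andP; split; lia.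
move=> /andP [H1 H2]; apply/mapP; exists (absz (n - m + r%:Z)%R).
  by rewrite mem_iota add0n; apply/andP; split; lia.
lia.
Qed.

Section Window.
Context {d' : measure_display} {S : measurableType d'}.

Definition Gw (r : nat) : set (set (int -> S)) :=
  <<s [set B | exists k (A : set S),
     [/\ (`|k| <= r)%N, measurable A & B = [set y : int -> S | A (y k)]]] >>.

Lemma Gw_cyl r : Gw r `<=` <<s @cylinder_events d' S >>.
Proof.
apply: (smallest_sub (@smallest_sigma_algebra _ setT _)).
move=> E [k [A [_ mA ->]]]; apply: sub_gen_smallest.
by exists k, A.
Qed.

Context {d : measure_display} {T : measurableType d} (Y : int -> T -> S).

Lemma Gw_sig r m B : Gw r B -> sig Y (window m r) (Psi Y m @^-1` B).
Proof.
move=> GB.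
have : Gw r `<=` [set B | sig Y (window m r) (Psi Y m @^-1` B)].
  apply: smallest_sub.
    by apply: sigma_pre; exact: smallest_sigma_algebra.
  move=> E [k [A [kr mA ->]]] /=; apply: sub_gen_smallest.
  exists (m + k), A; split => //.
  by rewrite mem_window; apply/andP; split; lia.
by apply.
Qed.

Lemma filtr_rep r E : filtr Y r E -> exists B, Gw r B /\ E = Psi Y 0 @^-1` B.
Proof.
move=> FE.
have : filtr Y r `<=` [set E | exists B, Gw r B /\ E = Psi Y 0 @^-1` B].
  apply: smallest_sub.
    by apply: sigma_img; exact: smallest_sigma_algebra.
  move=> E' [n [A [nr mA ->]]] /=.
  exists [set y : int -> S | A (y n)]; split.
    by apply: sub_gen_smallest; exists n, A.
  by apply/seteqP; split => w /=; rewrite /Psi add0r.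
by apply.
Qed.

End Window.


Lemma sigma_setC (U : Type) (G : set (set U)) A :
  sigma_algebra setT G -> G A -> G (~` A).
Proof. by move=> [_ GC _] GA; rewrite -setTD; apply: GC. Qed.

Lemma sigma_setU (U : Type) (G : set (set U)) A B :
  sigma_algebra setT G -> G A -> G B -> G (A `|` B).
Proof.
move=> [G0 GC GU] GA GB; rewrite -bigcup2E; apply: GU => -[|[|n]] //=.
Qed.

Lemma sigma_setI (U : Type) (G : set (set U)) A B :
  sigma_algebra setT G -> G A -> G B -> G (A `&` B).
Proof.
move=> sG GA GB; rewrite -[A `&` B]setCK setCI.
by apply: sigma_setC => //; apply: sigma_setU => //; apply: sigma_setC.
Qed.

Section Main.
Context {R : realType} {d : measure_display} {T : measurableType d}
  (P : probability T R) {d' : measure_display} {S : measurableType d'}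
  (Y : int -> T -> S) (phi : (int -> S) -> bool) (p : nat -> R).
Hypothesis Ymeas : forall n, measurable_fun setT (Y n).
Hypothesis Yid : forall n (A : set S), measurable A ->
          P (Y n @^-1` A) = P (Y 0 @^-1` A).
Hypothesis Yind : forall (s : seq int) (A : int -> set S), uniq s ->
          (forall i, measurable (A i)) ->
          P (\bigcap_(i in [set` s]) (Y i @^-1` A i))
          = (\prod_(i <- s) P (Y i @^-1` A i))%E.
Hypothesis phim : product_measurable phi.
Variable Rt : T -> option nat.
Hypothesis RtN : P [set w | Rt w = None] = 0%E.
Hypothesis Rtf : forall r, filtr Y r (R_le Rt r).
Hypothesis RtX : forall r (b : bool),
  filtr Y r ([set w | factor_process phi Y 0 w = b] `&` R_le Rt r).
Hypothesis p0 : p 0%N = 0.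
Hypothesis pge0 : forall t, 0 <= p t.
Hypothesis psum : (\sum_(0 <= t <oo) (p t)%:E = 1)%E.
Hypothesis stat : forall (s : seq int) (b : int -> bool) (m : int),
  P [set w | forall i, i \in s -> factor_process phi Y (i + m) w = b i]
  = P [set w | forall i, i \in s -> factor_process phi Y i w = b i].
Hypothesis inf1 : P [set w | forall N : int,
  (exists n, N < n /\ factor_process phi Y n w = true) /\
  (exists n, n < N /\ factor_process phi Y n w = true)] = 1%E.
Hypothesis gapP : forall ts : seq nat, all (fun t => (0 < t)%N) ts ->
  P (gap_event (factor_process phi Y) (0%R : int) ts)
  = (P [set w | factor_process phi Y (0%R : int) w = true] *
     \prod_(t <- ts) (p t)%:E)%E.

Local Notation X := (factor_process phi Y).

Lemma phi_pre b : <<s PCyl >> (phi @^-1` [set b]).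
Proof. exact: cyl_ev_PCyl (phim b). Qed.

Lemma Xmeas m b : measurable [set w | X m w = b].
Proof.
have -> : [set w | X m w = b] = Psi Y m @^-1` (phi @^-1` [set b]) by [].
by case: (shift_inv Ymeas Yid Yind m (phi_pre b)).
Qed.

Lemma meas_cond (b : bool) (A : set T) : measurable A ->
  measurable [set w | b /\ A w].
Proof.
case: b => mA.
  by rewrite (_ : [set w | true /\ A w] = A) //; apply/seteqP; split => w /= => [[]|].
by rewrite (_ : [set w | false /\ A w] = set0) //; apply/seteqP; split => w /= => [[]|].
Qed.

Lemma stat1 m b : P [set w | X m w = b] = P [set w | X 0 w = b].
Proof.
have := stat [:: 0] (fun _ => b) m.
have E1 : forall k : int, [set w | forall i, i \in [:: 0] -> X (i + k) w = b] =
   [set w | X k w = b].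
  move=> k; apply/seteqP; split => w /=.
    by move=> /(_ 0); rewrite inE eqxx add0r; apply.
  by move=> H i; rewrite inE => /eqP ->; rewrite add0r.
have E2 : [set w | forall i, i \in [:: 0] -> X i w = b] = [set w | X 0 w = b].
  apply/seteqP; split => w /=.
    by move=> /(_ 0); rewrite inE eqxx; apply.
  by move=> H i; rewrite inE => /eqP ->.
by rewrite E1 E2.
Qed.

Lemma stat2 a m : P [set w | X a w = true /\ X (a + m) w = true] =
  P [set w | X 0 w = true /\ X m w = true].
Proof.
have := stat [:: 0; m] (fun _ => true) a.
rewrite (_ : [set w | forall i, i \in [:: 0; m] -> X (i + a) w = true] =
   [set w | X a w = true /\ X (a + m) w = true]); last first.
  apply/seteqP; split => w /=.
    move=> H; split; first by have := H 0; rewrite inE eqxx add0r; apply.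
    by have := H m; rewrite !inE eqxx orbT addrC; apply.
  move=> [H1 H2] i; rewrite !inE => /orP[] /eqP ->; first by rewrite add0r.
  by rewrite addrC.
move=> ->; congr (P _); apply/seteqP; split => w /=.
  move=> H; split; first by have := H 0; rewrite inE eqxx; apply.
  by have := H m; rewrite !inE eqxx orbT; apply.
by move=> [H1 H2] i; rewrite !inE => /orP[] /eqP ->.
Qed.

Lemma Inf_meas : measurable [set w | forall N : int,
  (exists n, N < n /\ X n w = true) /\ (exists n, n < N /\ X n w = true)].
Proof.
rewrite (_ : [set w | _] = ~` \bigcup_(N : int) ~` (
   (\bigcup_(n : int) [set w | N < n /\ X n w = true]) `&`
   (\bigcup_(n : int) [set w | n < N /\ X n w = true]))); last first.
  apply/seteqP; split => w /=.
    move=> H [N _ /= HN]; apply: HN; case: (H N) => [[n [h1 h2]] [n' [h1' h2']]].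
    by split; [exists n|exists n'].
  move=> H N; have : ((\bigcup_(n : int) [set w | N < n /\ X n w = true]) `&`
   (\bigcup_(n : int) [set w | n < N /\ X n w = true])) w.
    by apply: contrapT => nh; apply: H; exists N.
  by move=> [[n _ /= h] [n' _ /= h']]; split; [exists n|exists n'].
apply: measurableC; apply: countable_bigcupT_measurable; first exact: countableP.
move=> N; apply: measurableC; apply: measurableI;
  apply: countable_bigcupT_measurable; try exact: countableP;
  by move=> n; apply: meas_cond; apply: Xmeas.
Qed.

Lemma q_pos : (0 < P [set w | X 0 w = true])%E.
Proof.
rewrite lt0e measure_ge0 andbT; apply/negP => /eqP q0.
have : (1 <= \sum_(0 <= k <oo) P [set w | X k%:Z w = true])%E.
  rewrite -inf1; apply: (@measure_sigma_subadditive _ _ _ P _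
    (fun k : nat => [set w | X k%:Z w = true]) (fun k => Xmeas _ _) Inf_meas).
  move=> w /= /(_ 0) [[n [n0 Xn]] _].
  by exists (absz n) => //=; rewrite gez0_abs //; exact: ltW.
by rewrite eseries0 ?lee_fin ?ler10 // => k _ _; rewrite stat1 q0.
Qed.

Lemma filtr_meas r : filtr Y r `<=` measurable.
Proof.
apply: smallest_sub; first exact: sigma_algebra_measurable.
by move=> E [n [A [_ mA ->]]]; rewrite -[_ @^-1` _]setTI; apply: Ymeas.
Qed.

Definition E r := [set w | X 0 w = true] `&` R_le Rt r.

Lemma E_meas r : measurable (E r).
Proof. exact (filtr_meas (@RtX r true)). Qed.

Lemma E_pos : exists r, (0 < P (E r))%E.
Proof.
apply: contrapT => H.
have E0 r : P (E r) = 0%E.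
  apply/eqP; rewrite eq_le measure_ge0 andbT leNgt; apply/negP => h.
  by apply: H; exists r.
have mN : measurable [set w | Rt w = None].
  rewrite (_ : [set w | _] = ~` \bigcup_(r in setT) R_le Rt r); last first.
    apply/seteqP; split => w /=.
      by move=> h [r _ [m [h' _]]]; rewrite h in h'.
    case eq: (Rt w) => [m|] // H0; exfalso; apply: H0.
    by exists m => //; exists m; split.
  apply: measurableC; apply: bigcup_measurable => r _.
  exact: (filtr_meas (@Rtf r)).
pose F (k : nat) := if k is k'.+1 then E k' else [set w | Rt w = None].
have mF k : measurable (F k) by case: k => [|k] //=; exact: E_meas.
have : (P [set w | X 0 w = true] <= \sum_(0 <= k <oo) P (F k))%E.
  apply: (measure_sigma_subadditive _ mF (Xmeas 0 true)).
  move=> w /= Xw; case eq: (Rt w) => [m|].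
    by exists m.+1 => //=; split => //; exists m; split.
  by exists 0%N.
rewrite eseries0; last by case => [|k] _ _ //=; rewrite E0.
by rewrite leNgt q_pos.
Qed.

Lemma meas_imp (b : bool) (A : set T) : measurable A ->
  measurable [set w | b -> A w].
Proof.
case: b => mA.
  by rewrite (_ : [set w | true -> A w] = A) //; apply/seteqP; split => w /=; [apply|move=> H _].
by rewrite (_ : [set w | false -> A w] = setT) //; apply/seteqP; split => w //=.
Qed.

Lemma gaps_meas ts : forall a, measurable [set w | gaps_from X a ts w].
Proof.
elim: ts => [|t ts IH] a /=; first by rewrite (_ : [set w | True] = setT).
have -> : [set w | gaps_from X a (t :: ts) w] =
  \bigcap_(j in setT) [set w | (0 < j < t)%N -> X (a + j%:Z) w = false] `&`
  ([set w | X (a + t%:Z) w = true] `&` [set w | gaps_from X (a + t%:Z) ts w]).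
  apply/seteqP; split => w /= [H1 [H2 H3]]; split => //.
  - by move=> j _; apply: H1.
  - by move=> j; apply: (H1 j I).
apply: measurableI; last by apply: measurableI => //; exact: Xmeas.
by apply: bigcap_measurableType => j _; apply: meas_imp; exact: Xmeas.
Qed.

Lemma gap_meas ts : measurable (gap_event X 0 ts).
Proof.
have -> : gap_event X 0 ts = [set w | X 0 w = true] `&` [set w | gaps_from X 0 ts w] by [].
by apply: measurableI; [exact: Xmeas|exact: gaps_meas].
Qed.

Lemma XX_meas a b : measurable [set w | X a w = true /\ X b w = true].
Proof. exact: (measurableI _ _ (Xmeas a true) (Xmeas b true)). Qed.

Lemma sig_sub s s' : {subset s <= s'} -> sig Y s `<=` sig Y s'.
Proof.
move=> ss'; apply: smallest_sub; first exact: smallest_sigma_algebra.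
move=> B [n [A [ns mA ->]]]; apply: sub_gen_smallest.
by exists n, A; split => //; apply: ss'.
Qed.

Lemma win_disj m m' r : m + r%:Z < m' - r%:Z ->
  forall i, i \in window m r -> i \notin window m' r.
Proof. by move=> H i; rewrite !mem_window => /andP [h1 h2]; apply/negP => /andP [h3 h4]; lia. Qed.

Lemma p_zero g : (forall t, 0 < p t -> (g %| t)%N) ->
  forall t, ~~ (g %| t)%N -> p t = 0.
Proof.
move=> Hg t gt; apply/eqP; rewrite eq_le pge0 andbT leNgt; apply/negP => /Hg.
by rewrite (negbTE gt).
Qed.

Lemma gap1 t : (0 < t)%N ->
  P (gap_event X 0 [:: t]) = (P [set w | X 0 w = true] * (p t)%:E)%E.
Proof. by move=> t0; rewrite gapP /= ?andbT // big_seq1. Qed.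

Lemma lattice g : (forall t, 0 < p t -> (g %| t)%N) ->
  forall m, (0 < m)%N -> ~~ (g %| m)%N ->
  P [set w | X 0 w = true /\ X m%:Z w = true] = 0%E.
Proof.
move=> Hg; elim/ltn_ind => m IH m0 gm.
pose F (t : nat) := if (0 < t <= m)%N then gap_event X 0 [:: t] `&` [set w | X m%:Z w = true] else set0.
have mF t : measurable (F t).
  rewrite /F; case: ifP => // _; apply: measurableI; [exact: gap_meas|exact: Xmeas].
have : (P [set w | X 0 w = true /\ X m%:Z w = true] <= \sum_(0 <= t <oo) P (F t))%E.
  apply: (measure_sigma_subadditive _ mF (XX_meas _ _)).
  move=> w /= [X0 Xm].
  have ex : exists j, (0 < j)%N && (X j%:Z w == true) by exists m; rewrite m0 Xm.
  case: (ex_minnP ex) => t /andP [t0 /eqP Xt] tmin.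
  have tm : (t <= m)%N by apply: tmin; rewrite m0 Xm.
  exists t => //; rewrite /F t0 tm /=; split => //; split => //; split; last first.
    by rewrite add0r.
  move=> j /andP [j0 jt]; rewrite add0r; case h: (X j%:Z w) => //.
  by have := tmin j; rewrite j0 h /= leqNgt jt => /(_ isT).
rewrite eseries0.
  by move=> H; apply/eqP; rewrite eq_le H measure_ge0.
move=> t _ _; rewrite /F; case: ifP => [/andP [t0 tm]|_]; last by rewrite measure0.
have [gt|gt] := boolP (g %| t)%N; last first.
  apply/eqP; rewrite eq_le measure_ge0 andbT.
  apply: (@le_trans _ _ (P (gap_event X 0 [:: t]))).
    apply: le_measure; rewrite ?inE; [|exact: gap_meas|exact: subIsetl].
    by apply: measurableI; [exact: gap_meas|exact: Xmeas].
  by rewrite gap1 // (p_zero Hg gt) mule0.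
have tlm : (t < m)%N by rewrite ltn_neqAle tm andbT; apply/eqP => etm; move: gm; rewrite -etm gt.
have gmt : ~~ (g %| m - t)%N.
  by apply/negP => h; move: gm; rewrite (_ : m = t + (m - t))%N ?dvdn_add //; lia.
apply/eqP; rewrite eq_le measure_ge0 andbT.
rewrite -(IH (m - t)%N _ _ gmt); [|lia|lia].
rewrite -(stat2 t%:Z (m - t)%N%:Z).
apply: le_measure; rewrite ?inE.
- by apply: measurableI; [exact: gap_meas|exact: Xmeas].
- exact: XX_meas.
move=> w /= [[_ [_ [Xt _]]] Xm]; split; first by rewrite add0r in Xt.
by rewrite (_ : t%:Z + (m - t)%N%:Z = m%:Z) //; lia.
Qed.

Section Shifted.
Variable r0 : nat.
Variable B0 : set (int -> S).
Hypothesis GB0 : Gw r0 B0.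
Hypothesis EB0 : E r0 = Psi Y 0 @^-1` B0.

Definition A m := Psi Y m @^-1` B0.

Lemma B0_PCyl : <<s PCyl >> B0.
Proof. exact: (@cyl_ev_PCyl _ _ B0 (@Gw_cyl _ _ r0 B0 GB0)). Qed.

Lemma A_meas m : measurable (A m).
Proof. by case: (shift_inv Ymeas Yid Yind m B0_PCyl). Qed.

Lemma PA m : P (A m) = P (E r0).
Proof. by rewrite EB0; case: (shift_inv Ymeas Yid Yind m B0_PCyl). Qed.

Lemma A_sig m : sig Y (window m r0) (A m).
Proof. exact: Gw_sig GB0. Qed.

Lemma A_null m : P (A m `&` [set w | X m w = false]) = 0%E.
Proof.
have HB : <<s PCyl >> (B0 `&` phi @^-1` [set false]).
  by apply: (@sigma_setI _ <<s PCyl >>); [exact: smallest_sigma_algebra|exact: B0_PCyl|exact: phi_pre].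
have -> : A m `&` [set w | X m w = false] = Psi Y m @^-1` (B0 `&` phi @^-1` [set false]) by [].
case: (shift_inv Ymeas Yid Yind m HB) => _ _ ->.
rewrite (_ : Psi Y 0 @^-1` _ = set0) ?measure0 //.
apply/seteqP; split => w //= [Bw phiw].
have : E r0 w by rewrite EB0.
by move=> [X0 _]; move: phiw; rewrite /= -/(X 0 w) X0.
Qed.

Lemma A0 : A 0 = E r0.
Proof. by rewrite EB0. Qed.

End Shifted.

Lemma nonlat : non_lattice p.
Proof.
move=> g Hg.
have [r0 Epos] := E_pos.
have [B0 [GB0 EB0]] := filtr_rep (@RtX r0 true).
case: g Hg => [|g] Hg.
  exfalso; have [t pt] : exists t, 0 < p t.
    apply: contrapT => H; move: psum; rewrite eseries0.
      by move=> h; move: (@lte01 R); rewrite -h ltxx.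
    move=> t _ _; congr EFin; apply/eqP; rewrite eq_le pge0 andbT leNgt.
    by apply/negP => h; apply: H; exists t.
  by have := Hg t pt; rewrite dvd0n => /eqP t0; rewrite t0 p0 ltxx in pt.
case: g Hg => [//|g] Hg.
set m := ((r0.*2.+1) * g.+2).+1.
have hm : (r0.*2.+1 < m)%N by rewrite ltnS leq_pmulr.
have gm : ~~ (g.+2 %| m)%N.
  by rewrite /m -[X in (_ %| X)%N]addn1 dvdn_addr ?dvdn_mull // dvdn1.
have L : P [set w | X 0 w = true /\ X m%:Z w = true] = 0%E := lattice Hg (ltn0Sn _) gm.
have ind : P (A B0 0 `&` A B0 m%:Z) = (P (E r0) * P (E r0))%E.
  rewrite (indep Ymeas Yind (s := window 0 r0) (s' := window m%:Z r0)).
  - by rewrite !(PA GB0 EB0).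
  - by apply: win_disj; lia.
  - exact: A_sig.
  - exact: A_sig.
have mA := A_meas GB0.
have sub : A B0 0 `&` A B0 m%:Z `<=` [set w | X 0 w = true /\ X m%:Z w = true] `|`
   ((A B0 0 `&` [set w | X 0 w = false]) `|` (A B0 m%:Z `&` [set w | X m%:Z w = false])).
  move=> w [a0 am]; case h0: (X 0 w); case hm': (X m%:Z w).
  - by left.
  - by right; right.
  - by right; left.
  - by right; left.
have mU : measurable ((A B0 0 `&` [set w | X 0 w = false]) `|` (A B0 m%:Z `&` [set w | X m%:Z w = false])).
  by apply: measurableU; apply: measurableI => //; exact: Xmeas.
have : (P (A B0 0 `&` A B0 m%:Z) <= 0)%E.
  apply: (le_trans (le_measure _ _ _ sub)); rewrite ?inE.
  - exact: measurableI.
  - by apply: measurableU => //; exact: XX_meas.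
  apply: (le_trans (measureU2 _ (XX_meas _ _) mU)).
  rewrite -[leRHS]adde0; apply: leeD; first by rewrite -L.
  apply: (le_trans (measureU2 _ _ _)).
  - by apply: measurableI => //; exact: Xmeas.
  - by apply: measurableI => //; exact: Xmeas.
  rewrite -[leRHS]adde0; apply: leeD.
    by rewrite -(A_null GB0 EB0 0).
  by rewrite -(A_null GB0 EB0 m%:Z).
by rewrite ind leNgt (mule_gt0 Epos Epos).
Qed.

Definition cen (r0 j : nat) : int := ((j.+1) * r0.*2.+1)%N%:Z.
Fixpoint Wf (r0 k : nat) : seq int :=
  if k is k'.+1 then Wf r0 k' ++ window (cen r0 k') r0 else [::].

Lemma mem_Wf r0 k i : i \in Wf r0 k -> exists2 j, (j < k)%N & i \in window (cen r0 j) r0.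
Proof.
elim: k => [//|k IH] /=; rewrite mem_cat => /orP [/IH [j jk ij]|iw].
  by exists j => //; exact: ltnW.
by exists k.
Qed.

Lemma Wf_disj r0 k i : i \in Wf r0 k -> i \notin window (cen r0 k) r0.
Proof.
move=> /mem_Wf [j jk ij]; apply: (win_disj _ ij); rewrite /cen.
have h1 : (j.+2 * r0.*2.+1 <= k.+1 * r0.*2.+1)%N by rewrite leq_mul2r ltnS jk orbT.
have h2 : (j.+2 * r0.*2.+1 = j.+1 * r0.*2.+1 + r0.*2.+1)%N by rewrite mulSn addnC.
move: h1 h2; generalize (j.+1 * r0.*2.+1)%N (k.+1 * r0.*2.+1)%N (j.+2 * r0.*2.+1)%N.
move=> a b c h1 h2; lia.
Qed.

Section Tail.
Variable r0 : nat.
Variable B0 : set (int -> S).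
Hypothesis GB0 : Gw r0 B0.
Hypothesis EB0 : E r0 = Psi Y 0 @^-1` B0.

Fixpoint Iset (k : nat) : set T :=
  if k is k'.+1 then Iset k' `&` ~` A B0 (cen r0 k') else setT.
Fixpoint Nset (k : nat) : set T :=
  if k is k'.+1 then Nset k' `|` (A B0 (cen r0 k') `&` [set w | X (cen r0 k') w = false])
  else set0.

Lemma sig_sa s : sigma_algebra setT (sig Y s).
Proof. exact: smallest_sigma_algebra. Qed.

Lemma sig_setT s : sig Y s setT.
Proof. by case: (sig_sa s) => H0 HC _; rewrite -(setD0 setT); apply: HC. Qed.

Lemma sig_setC s B : sig Y s B -> sig Y s (~` B).
Proof. exact: (sigma_setC (sig_sa s)). Qed.

Lemma sig_setI s B C : sig Y s B -> sig Y s C -> sig Y s (B `&` C).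
Proof. exact: (sigma_setI (sig_sa s)). Qed.

Lemma Iset_sig k : sig Y (Wf r0 k) (Iset k).
Proof.
elim: k => [|k IH] /=; first exact: sig_setT.
apply: sig_setI.
- have ss : {subset Wf r0 k <= Wf r0 k ++ window (cen r0 k) r0}.
    by move=> i; rewrite mem_cat => ->.
  exact: (sig_sub ss IH).
- apply: sig_setC.
  have ss : {subset window (cen r0 k) r0 <= Wf r0 k ++ window (cen r0 k) r0}.
    by move=> i; rewrite mem_cat orbC => ->.
  exact: (sig_sub ss (A_sig GB0 (m:=cen r0 k))).
Qed.

Lemma Iset_meas k : measurable (Iset k).
Proof. exact: (sig_meas Ymeas (Iset_sig (k:=k))). Qed.

Lemma PIset k : P (Iset k) = ((1 - fine (P (E r0))) ^+ k)%:E.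
Proof.
elim: k => [|k IH] /=; first by rewrite expr0 probability_setT.
rewrite (indep Ymeas Yind (s := Wf r0 k) (s' := window (cen r0 k) r0)).
- rewrite IH probability_setC; last exact: (A_meas GB0).
  by rewrite (PA GB0 EB0) (finP P (E_meas r0)) -EFinB -EFinM exprSr.
- by move=> i; apply: Wf_disj.
- exact: Iset_sig.
- by apply: sig_setC; exact: A_sig.
Qed.

Lemma Nset_meas k : measurable (Nset k).
Proof.
elim: k => [|k IH] /=; [exact: measurable0|]. apply: measurableU => //.
by apply: measurableI; [exact: (A_meas GB0)|exact: Xmeas].
Qed.

Lemma PNset k : P (Nset k) = 0%E.
Proof.
elim: k => [|k IH] /=; first exact: measure0.
apply/eqP; rewrite eq_le measure_ge0 andbT.
apply: (le_trans (measureU2 _ (Nset_meas k) _)).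
  by apply: measurableI; [exact: (A_meas GB0)|exact: Xmeas].
rewrite -[leRHS]adde0; apply: leeD; first by rewrite -IH.
by rewrite -(A_null GB0 EB0 (cen r0 k)).
Qed.

Definition Zt (t : nat) := [set w | forall j : nat, (0 < j < t)%N -> X j%:Z w = false].

Lemma Zt_meas t : measurable (Zt t).
Proof.
have -> : Zt t = \bigcap_(j in setT) [set w | (0 < j < t)%N -> X j%:Z w = false].
  by apply/seteqP; split => w /= H j; [move=> _; apply: H|apply: H].
by apply: bigcap_measurableType => j _; apply: meas_imp; exact: Xmeas.
Qed.

Lemma Zt_sub t k : (k * r0.*2.+1 < t)%N -> Zt t `<=` Iset k `|` Nset k.
Proof.
elim: k => [|k IH] kt w Zw /=; first by left.
have kt' : (k * r0.*2.+1 < t)%N.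
  by apply: leq_ltn_trans kt; rewrite leq_mul2r leqnSn orbT.
case: (IH kt' w Zw) => [Iw|Nw]; last by right; left.
have [Aw|nAw] := pselect (A B0 (cen r0 k) w).
  right; right; split => //; apply: (Zw (k.+1 * r0.*2.+1)%N).
  by apply/andP; split; [rewrite muln_gt0|exact: kt].
by left; split.
Qed.

Lemma PZt t k : (k * r0.*2.+1 < t)%N ->
  (P (Zt t) <= ((1 - fine (P (E r0))) ^+ k)%:E)%E.
Proof.
move=> kt; apply: (le_trans (le_measure _ _ _ (Zt_sub kt))); rewrite ?inE.
- exact: Zt_meas.
- by apply: measurableU; [exact: Iset_meas|exact: Nset_meas].
apply: (le_trans (measureU2 _ (Iset_meas k) (Nset_meas k))).
rewrite -[leRHS]adde0; apply: leeD; first by rewrite -PIset.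
by rewrite -(PNset k).
Qed.

End Tail.

Lemma tail_le t : (1 <= t)%N ->
  (P [set w | X 0 w = true] * \sum_(t <= s <oo) (p s)%:E <= P (Zt t))%E.
Proof.
move=> t1.
pose G (s : nat) := if (t <= s)%N then gap_event X 0 [:: s] else set0.
have mG s : measurable (G s) by rewrite /G; case: ifP => // _; exact: gap_meas.
have tG : trivIset setT G.
  move=> i j _ _ [w []]; rewrite /G.
  case: ifP => ti; case: ifP => tj // [X0 [Hi [Xi _]]] [_ [Hj [Xj _]]].
  case: (ltngtP i j) => // ij.
    by move: (Hj i); rewrite add0r in Xi; rewrite Xi ij andbT; move/(_ (leq_trans t1 ti)).
  by move: (Hi j); rewrite add0r in Xj; rewrite Xj ij andbT; move/(_ (leq_trans t1 tj)).
have sub : \bigcup_s G s `<=` Zt t.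
  move=> w [s _]; rewrite /G; case: ifP => // ts [X0 [Hs _]] j /andP [j0 jt].
  by rewrite -(add0r j%:Z); apply: Hs; rewrite j0 /=; exact: leq_trans jt ts.
have mU : measurable (\bigcup_s G s) by apply: bigcup_measurable => s _.
have Hle : (P (\bigcup_s G s) <= P (Zt t))%E.
  by apply: le_measure => //; rewrite inE; [exact: mU|exact: Zt_meas].
apply: (le_trans _ Hle).
rewrite measure_semi_bigcup //.
have eqS : (\sum_(t <= s <oo) (p s)%:E =
    \sum_(0 <= s <oo) (if (t <= s)%N then (p s)%:E else 0))%E.
  by rewrite eseries_cond eseries_mkcondr.
rewrite eqS (finP P (Xmeas 0 true)) -nneseriesZl; last first.
  by move=> i _; case: ifP => _ //; rewrite lee_fin.
apply: lee_nneseries => i _.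
  by case: ifP => _; rewrite ?mule0 // mule_ge0 // lee_fin ?fine_ge0 ?measure_ge0.
rewrite /G; case: ifP => ti; last by rewrite mule0 measure0.
have := gap1 (leq_trans t1 ti); rewrite (finP P (Xmeas 0 true)) => <-.
exact: le_refl.
Qed.

Lemma exptail : exp_tails p.
Proof.
have [r0 Epos] := E_pos.
have [B0 [GB0 EB0]] := filtr_rep (@RtX r0 true).
have eps0 : 0 < fine (P (E r0)) by rewrite -lte_fin -(finP P (E_meas r0)).
have eps1 : fine (P (E r0)) <= 1.
  by rewrite -lee_fin -(finP P (E_meas r0)) probability_le1 //; exact: E_meas.
have q0 : 0 < fine (P [set w | X 0 w = true]).
  by rewrite -lte_fin -(finP P (Xmeas 0 true)) q_pos.
set eps := fine (P (E r0)) in eps0 eps1 *.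
set q := fine (P [set w | X 0 w = true]) in q0 *.
set L := r0.*2.+1.
have L0 : (0 < L)%N by [].
exists (expR eps / q), (eps / L%:R); split; [|split].
- by apply: divr_gt0 => //; exact: expR_gt0.
- by apply: divr_gt0 => //; rewrite ltr0n.
move=> t t1.
set k := (t.-1 %/ L)%N.
have kt : (k * L < t)%N.
  by apply: (leq_ltn_trans (leq_trunc_div _ _)); rewrite prednK.
have tk : (t <= k.+1 * L)%N.
  have := ltn_pmod t.-1 L0; have := divn_eq t.-1 L; rewrite -/k mulSn.
  by move: (k * L)%N (t.-1 %% L)%N => a b; lia.
have H3 := le_trans (tail_le t1) (PZt GB0 EB0 kt).
rewrite (finP P (Xmeas 0 true)) -/q -/eps in H3.
have H4 : (\sum_(t <= s <oo) (p s)%:E <= (q^-1)%:E * ((1 - eps) ^+ k)%:E)%E.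
  by rewrite lee_pdivlMl.
apply: (le_trans H4); rewrite -EFinM lee_fin.
have -> : expR eps / q * expR (- (eps / L%:R * t%:R)) =
   q^-1 * (expR eps * expR (- (eps / L%:R * t%:R))).
  by rewrite mulrAC mulrC.
apply: ler_wpM2l; first by rewrite invr_ge0 ltW.
apply: (@le_trans _ _ (expR (- eps) ^+ k)).
  apply: lerXn2r; rewrite ?nnegrE ?subr_ge0 ?expR_ge0 //.
  exact: expR_ge1Dx.
rewrite -expRM_natr -expRD ler_expR.
have ht : (t%:R : R) <= k.+1%:R * L%:R by rewrite -natrM ler_nat.
have h5 : eps / L%:R * t%:R <= eps / L%:R * (k.+1%:R * L%:R).
  by apply: ler_wpM2l => //; rewrite divr_ge0 ?ltW.
have h6 : eps / L%:R * (k.+1%:R * L%:R) = eps * k%:R + eps.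
  rewrite -[k.+1]addn1 natrD; field.
  by rewrite pnatr_eq0.
lra.
Qed.

End Main.

Theorem proposition3 (R : realType) (d : measure_display) (T : measurableType d)
  (P : probability T R) (d' : measure_display) (S : measurableType d')
  (Y : int -> T -> S) (phi : (int -> S) -> bool) (p : nat -> R) :
  iid_process P Y ->
  finitary_factor P Y phi ->
  stationary_renewal P (factor_process phi Y) p ->
  non_lattice p /\ exp_tails p.
Proof.
move=> [Ymeas Yid Yind] [phim [Rt [RtN Rtf RtX]]] [[p0 pge0 psum] stat inf1 gapP].
split; [eapply nonlat|eapply exptail]; eassumption.
Qed.
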